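(* Let $\alpha,\beta,\gamma\in\mathbb{R}$, and let $G_3$ be the connected, simply connected Lie group whose Lie algebra $\mathfrak{g}_3$ has a basis $\{e_1,e_2,e_3\}$ with $[e_1,e_2]=-\gamma e_3$, $[e_1,e_3]=-\beta e_2$, $[e_2,e_3]=\alpha e_1$, equipped with the left-invariant Lorentzian metric $g$ for which $\{e_1,e_2,e_3\}$ is pseudo-orthonormal with $e_3$ timelike, and with the product structure $J$. Let $\lambda_0,c\in\mathbb{R}$. Then there exists a derivation $D$ of $\mathfrak{g}_3$ with $\widetilde{\mathrm{Ric}}^1=(s^1\lambda_0+c)\mathrm{Id}+D$ (i.e. $(G_3,g,J)$ is an algebraic Schouten soliton associated to the Kobayashi–Nomizu connection $\nabla^1$) if and only if one of the following holds: (i) $\alpha=\beta=\gamma=0$ and $c\neq0$; (ii) $\alpha=0$ and $c=-\beta\gamma+\beta\gamma\lambda_0$; (iii) $\beta=0$ and $c=-\alpha\gamma+\alpha\gamma\lambda_0$; (iv) $\alpha\beta\neq0$, $\gamma=0$ and $c=0$.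
   Context: Pseudo-orthonormal means $g(e_1,e_1)=g(e_2,e_2)=1$, $g(e_3,e_3)=-1$, $g(e_i,e_j)=0$ for $i\neq j$; left-invariant tensors are identified with their values on $\mathfrak{g}$. $\nabla$ is the Levi-Civita connection of $g$. The product structure $J$ is the left-invariant endomorphism with $Je_1=e_1$, $Je_2=e_2$, $Je_3=-e_3$. The canonical connection is $\nabla^0_XY=\nabla_XY-\frac12(\nabla_XJ)JY$, and the Kobayashi–Nomizu connection is $\nabla^1_XY=\nabla^0_XY-\frac14[(\nabla_YJ)JX-(\nabla_{JY}J)X]$. For $k=0,1$: $R^k(X,Y)Z=\nabla^k_X\nabla^k_YZ-\nabla^k_Y\nabla^k_XZ-\nabla^k_{[X,Y]}Z$; $\rho^k(X,Y)=-g(R^k(X,e_1)Y,e_1)-g(R^k(X,e_2)Y,e_2)+g(R^k(X,e_3)Y,e_3)$; $\widetilde\rho^k(X,Y)=\frac12(\rho^k(X,Y)+\rho^k(Y,X))$; $\widetilde{\mathrm{Ric}}^k$ is defined by $\widetilde\rho^k(X,Y)=g(\widetilde{\mathrm{Ric}}^k(X),Y)$; and $s^k=\widetilde\rho^k(e_1,e_1)+\widetilde\rho^k(e_2,e_2)-\widetilde\rho^k(e_3,e_3)$. A derivation of $\mathfrak{g}$ is a linear map $D$ with $D[X,Y]=[DX,Y]+[X,DY]$. $(G,g,J)$ is an algebraic Schouten soliton associated to $\nabla^k$ (with real constants $\lambda_0,c$) if $\widetilde{\mathrm{Ric}}^k=(s^k\lambda_0+c)\mathrm{Id}+D$ for some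 derivation $D$. *)

(* Defs.v *)
(* The Lie algebra g_3 is identified with R^3 = 'rV[R]_3 via
   the basis e_1, e_2, e_3 (= delta rows at indices 0, 1, 2). All left-invariant
   tensors are identified with their values on g_3. *)
From HB Require Import structures.
From mathcomp Require Import all_boot all_order all_algebra.
Set Implicit Arguments. Unset Strict Implicit. Unset Printing Implicit Defensive.
Import Order.TTheory GRing.Theory Num.Theory.
Local Open Scope ring_scope.

Section G3.
Variable R : realFieldType.
Variables alpha beta gamma : R.

Local Notation V := 'rV[R]_3.

Definition i1 : 'I_3 := @Ordinal 3 0 isT.
Definition i2 : 'I_3 := @Ordinal 3 1 isT.
Definition i3 : 'I_3 := @Ordinal 3 2 isT.

Definition ev (i : 'I_3) : V := delta_mx 0 i.
Definition e1 : V := ev i1.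
Definition e2 : V := ev i2.
Definition e3 : V := ev i3.

Definition brb (i j : 'I_3) : V :=
  match nat_of_ord i, nat_of_ord j with
  | 0, 1 => - gamma *: e3
  | 1, 0 => gamma *: e3
  | 0, 2 => - beta *: e2
  | 2, 0 => beta *: e2
  | 1, 2 => alpha *: e1
  | 2, 1 => - alpha *: e1
  | _, _ => 0
  end.

Definition br (X Y : V) : V := \sum_(i < 3) \sum_(j < 3) (X 0 i * Y 0 j) *: brb i j.

Definition eps (i : 'I_3) : R := if i == i3 then -1 else 1.

Definition g (X Y : V) : R := \sum_(i < 3) eps i * X 0 i * Y 0 i.

(* Levi-Civita connection on left-invariant fields, via the Koszul formula
   2 g(nabla_X Y, Z) = g([X,Y],Z) - g([Y,Z],X) + g([Z,X],Y),
   and nabla_X Y = sum_k eps_k g(nabla_X Y, e_k) e_k *)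
Definition koszul (X Y Z : V) : R := (g (br X Y) Z - g (br Y Z) X + g (br Z X) Y) / 2.
Definition nabla (X Y : V) : V := \sum_(k < 3) (eps k * koszul X Y (ev k)) *: ev k.

Definition J (X : V) : V := \row_(i < 3) (if i == i3 then - X 0 i else X 0 i).

Definition nablaJ (X Y : V) : V := nabla X (J Y) - J (nabla X Y).

Definition nabla0 (X Y : V) : V := nabla X Y - 2^-1 *: nablaJ X (J Y).

Definition nabla1 (X Y : V) : V :=
  nabla0 X Y - 4^-1 *: (nablaJ Y (J X) - nablaJ (J Y) X).

Definition curv (nab : V -> V -> V) (X Y Z : V) : V :=
  nab X (nab Y Z) - nab Y (nab X Z) - nab (br X Y) Z.

Definition ricci (nab : V -> V -> V) (X Y : V) : R :=
  - g (curv nab X e1 Y) e1 - g (curv nab X e2 Y) e2 + g (curv nab X e3 Y) e3.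

Definition sricci (nab : V -> V -> V) (X Y : V) : R :=
  2^-1 * (ricci nab X Y + ricci nab Y X).

(* Ricci operator: g(Ric X, Y) = sricci X Y *)
Definition Ric_op (nab : V -> V -> V) (X : V) : V :=
  \sum_(k < 3) (eps k * sricci nab X (ev k)) *: ev k.

Definition scal (nab : V -> V -> V) : R :=
  sricci nab e1 e1 + sricci nab e2 e2 - sricci nab e3 e3.

Definition is_derivation (D : 'M[R]_3) : Prop :=
  forall X Y : V, br X Y *m D = br (X *m D) Y + br X (Y *m D).

Definition alg_schouten_soliton (nab : V -> V -> V) (lambda0 c : R) : Prop :=
  exists D : 'M[R]_3, is_derivation D /\
    forall X : V, Ric_op nab X = (scal nab * lambda0 + c) *: X + X *m D.

End G3.

(* Main.v *)
Require Import Defs.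
From HB Require Import structures.
From mathcomp Require Import all_boot all_order all_algebra.
From mathcomp Require Import ring.
Import Order.TTheory GRing.Theory Num.Theory.
Local Open Scope ring_scope.

Lemma sum3 (T : nmodType) (F : 'I_3 -> T) : \sum_(i < 3) F i = F i1 + F i2 + F i3.
Proof.
rewrite !big_ord_recr big_ord0 /= add0r.
by congr (F _ + F _ + F _); apply/val_inj.
Qed.

Lemma row3P (T : Type) (u v : 'rV[T]_3) :
  u 0 i1 = v 0 i1 -> u 0 i2 = v 0 i2 -> u 0 i3 = v 0 i3 -> u = v.
Proof.
move=> h1 h2 h3; apply/rowP => -[[|[|[|?]]] ?] //.
- by rewrite (_ : Ordinal _ = i1) //; apply/val_inj.
- by rewrite (_ : Ordinal _ = i2) //; apply/val_inj.
- by rewrite (_ : Ordinal _ = i3) //; apply/val_inj.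
Qed.

Section S.
Variable R : realFieldType.
Variables al be ga : R.
Local Notation V := 'rV[R]_3.
Definition v3 (a b c : R) : V := \row_(j < 3) nth 0 [:: a; b; c] j.

Lemma brE (X Y : V) : br al be ga X Y =
  v3 (al * (X 0 i2 * Y 0 i3 - X 0 i3 * Y 0 i2))
     (- be * (X 0 i1 * Y 0 i3 - X 0 i3 * Y 0 i1))
     (- ga * (X 0 i1 * Y 0 i2 - X 0 i2 * Y 0 i1)).
Proof.
rewrite /br /v3.
apply: row3P; rewrite !sum3 /= !mxE /=; ring.
Qed.

Lemma gE (X Y : V) : g X Y = X 0 i1 * Y 0 i1 + X 0 i2 * Y 0 i2 - X 0 i3 * Y 0 i3.
Proof. rewrite /g sum3 /eps /=; ring. Qed.

Lemma v3E a b c : (v3 a b c) 0 i1 = a /\ (v3 a b c) 0 i2 = b /\ (v3 a b c) 0 i3 = c.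
Proof. by rewrite !mxE. Qed.

Lemma JE (X : V) : J X = v3 (X 0 i1) (X 0 i2) (- X 0 i3).
Proof. by apply: row3P; rewrite !mxE /=. Qed.

Lemma nablaE (X Y : V) : nabla al be ga X Y =
  v3 ((al - be + ga) / 2 * X 0 i2 * Y 0 i3 - (al + be - ga) / 2 * X 0 i3 * Y 0 i2)
     ((al - be - ga) / 2 * X 0 i1 * Y 0 i3 + (al + be - ga) / 2 * X 0 i3 * Y 0 i1)
     ((al - be - ga) / 2 * X 0 i1 * Y 0 i2 + (al - be + ga) / 2 * X 0 i2 * Y 0 i1).
Proof.
rewrite /nabla /koszul sum3 !brE !gE.
apply: row3P; rewrite !mxE /= /eps /=; ring.
Qed.

Lemma nabla1E (X Y : V) : nabla1 al be ga X Y =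
  v3 (- al * X 0 i3 * Y 0 i2) (be * X 0 i3 * Y 0 i1) 0.
Proof.
rewrite /nabla1 /nabla0 /nablaJ !JE !nablaE ?JE.
apply: row3P; rewrite !mxE /=; field. all: try by rewrite ?pnatr_eq0.
Qed.

Lemma curvE (X Y Z : V) : curv al be ga (nabla1 al be ga) X Y Z =
  v3 (- al * (X 0 i3 * be * Y 0 i3 * Z 0 i1 - Y 0 i3 * be * X 0 i3 * Z 0 i1)
      + al * (- ga * (X 0 i1 * Y 0 i2 - X 0 i2 * Y 0 i1)) * Z 0 i2)
     (be * (X 0 i3 * (- al) * Y 0 i3 * Z 0 i2 - Y 0 i3 * (- al) * X 0 i3 * Z 0 i2)
      - be * (- ga * (X 0 i1 * Y 0 i2 - X 0 i2 * Y 0 i1)) * Z 0 i1) 0.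
Proof.
rewrite /curv !nabla1E brE; apply: row3P; rewrite !mxE /=; ring.
Qed.

Lemma RicE (X : V) : Ric_op al be ga (nabla1 al be ga) X =
  v3 (- be * ga * X 0 i1) (- al * ga * X 0 i2) 0.
Proof.
rewrite /Ric_op sum3 /sricci /ricci !curvE /e1 /e2 /e3 !gE.
apply: row3P; rewrite !mxE /= /eps /=; field. all: try by rewrite ?pnatr_eq0.
Qed.

Lemma scalE : scal al be ga (nabla1 al be ga) = - ga * (al + be).
Proof.
rewrite /scal /sricci /ricci !curvE /e1 /e2 /e3 !gE !mxE /=; field. all: try by rewrite ?pnatr_eq0.
Qed.

Definition Dm (d1 d2 d3 : R) : 'M[R]_3 :=
  \matrix_(i < 3, j < 3) ((i == j)%:R * nth 0 [:: d1; d2; d3] i).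

Lemma mulD (X : V) d1 d2 d3 :
  X *m Dm d1 d2 d3 = v3 (X 0 i1 * d1) (X 0 i2 * d2) (X 0 i3 * d3).
Proof. apply: row3P; rewrite !mxE sum3 !mxE /=; ring. Qed.

Lemma lin0 (x y w f : R) : x = y -> f = w * (x - y) -> f = 0.
Proof. by move=> -> ->; rewrite subrr mulr0. Qed.

Lemma lin1 (x y w f : R) : f = 0 -> x - y = w * f -> x = y.
Proof. by move=> -> /eqP; rewrite mulr0 subr_eq0 => /eqP. Qed.

Lemma deriv_iff d1 d2 d3 : is_derivation al be ga (Dm d1 d2 d3) <->
  [/\ al * (d1 - d2 - d3) = 0, be * (d1 + d3 - d2) = 0 & ga * (d1 + d2 - d3) = 0].
Proof.
split.
  move=> h.
  have E1 := h (e2 R) (e3 R); have E2 := h (e1 R) (e3 R); have E3 := h (e1 R) (e2 R).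
  rewrite /e1 /e2 /e3 !brE !mulD in E1 E2 E3.
  move/(congr1 (fun v : V => v 0 i1)): E1; rewrite !mxE /= => E1.
  move/(congr1 (fun v : V => v 0 i2)): E2; rewrite !mxE /= => E2.
  move/(congr1 (fun v : V => v 0 i3)): E3; rewrite !mxE /= => E3.
  split; [apply: (@lin0 _ _ 1 _ E1)|apply: (@lin0 _ _ 1 _ E2)|apply: (@lin0 _ _ 1 _ E3)]; ring.
move=> [Fa Fb Fg] X Y; rewrite !brE !mulD; apply: row3P; rewrite !mxE /=.
- by apply: (@lin1 _ _ (X 0 i2 * Y 0 i3 - X 0 i3 * Y 0 i2) _ Fa); ring.
- by apply: (@lin1 _ _ (X 0 i1 * Y 0 i3 - X 0 i3 * Y 0 i1) _ Fb); ring.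
- by apply: (@lin1 _ _ (X 0 i1 * Y 0 i2 - X 0 i2 * Y 0 i1) _ Fg); ring.
Qed.
End S.

Lemma ord3P (P : 'I_3 -> Prop) : P i1 -> P i2 -> P i3 -> forall i, P i.
Proof.
move=> h1 h2 h3 [[|[|[|?]]] ?] //.
- by rewrite (_ : Ordinal _ = i1) //; apply/val_inj.
- by rewrite (_ : Ordinal _ = i2) //; apply/val_inj.
- by rewrite (_ : Ordinal _ = i3) //; apply/val_inj.
Qed.


Lemma lin2 (R : realFieldType) (x y w1 f1 w2 f2 : R) :
  f1 = 0 -> f2 = 0 -> x - y = w1 * f1 + w2 * f2 -> x = y.
Proof. by move=> -> -> /eqP; rewrite !mulr0 addr0 subr_eq0 => /eqP. Qed.

Theorem theorem4p7 (R : realFieldType) (alpha beta gamma lambda0 c : R) :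
  alg_schouten_soliton alpha beta gamma
    (nabla1 alpha beta gamma) lambda0 c
  <->
  [\/ (alpha = 0 /\ beta = 0 /\ gamma = 0 /\ c != 0),
      (alpha = 0 /\ c = - (beta * gamma) + beta * gamma * lambda0),
      (beta = 0 /\ c = - (alpha * gamma) + alpha * gamma * lambda0)
    | (alpha * beta != 0 /\ gamma = 0 /\ c = 0)].
Proof.
rewrite /alg_schouten_soliton scalE.
set k := - gamma * (alpha + beta) * lambda0 + c.
have Hc : c = k + gamma * (alpha + beta) * lambda0 by rewrite /k; ring.
split.
  move=> [D [hD hR]].
  have HD : D = Dm _ (- beta * gamma - k) (- alpha * gamma - k) (- k).
    apply/row_matrixP; apply: ord3P;
    match goal with |- row ?i _ = _ =>
      have := hR (ev R i); rewrite RicE => /(congr1 (fun v : 'rV[R]_3 => v - k *: ev R i));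
      rewrite addrAC subrr add0r !rowE -/(ev R i) => <-
    end; rewrite mulD; apply: row3P; rewrite !mxE /=; ring.
  rewrite HD in hD; move/deriv_iff: hD => [Fa Fb Fg].
  have [a0|a0] := eqVneq alpha 0.
    have [/andP [/eqP b0 /eqP g0] | bg] := boolP ((beta == 0) && (gamma == 0)).
      have [c0|c0] := eqVneq c 0.
        by apply: Or42; split => //; rewrite c0 b0; ring.
      by apply: Or41.
    apply: Or42; split => //.
    rewrite Hc a0; rewrite negb_and in bg; case/orP: bg => [b0|g0].
      move/eqP: Fb; rewrite mulf_eq0 (negbTE b0) /= => /eqP Fb.
      rewrite a0 in Fb; apply: (@lin1 _ _ _ (-1) _ Fb); ring.
    move/eqP: Fg; rewrite mulf_eq0 (negbTE g0) /= => /eqP Fg.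
    rewrite a0 in Fg; apply: (@lin1 _ _ _ (-1) _ Fg); ring.
  move/eqP: Fa; rewrite mulf_eq0 (negbTE a0) /= => /eqP Fa.
  have [b0|b0] := eqVneq beta 0.
    apply: Or43; split => //; rewrite Hc b0; rewrite b0 in Fa.
    apply: (@lin1 _ _ _ 1 _ Fa); ring.
  move/eqP: Fb; rewrite mulf_eq0 (negbTE b0) /= => /eqP Fb.
  have k0 : k = 0.
    have : k *+ 2 = 0 by apply: (@lin2 _ _ _ 1 _ (-1) _ Fa Fb); ring.
    by move/eqP; rewrite mulrn_eq0 /= => /eqP.
  have [g0|g0] := eqVneq gamma 0.
    apply: Or44; split; first by rewrite mulf_neq0.
    by split => //; rewrite Hc g0 k0; ring.
  exfalso.
  move/eqP: Fg; rewrite mulf_eq0 (negbTE g0) /= => /eqP Fg.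
  rewrite k0 in Fa Fg.
  have : (alpha * gamma) *+ 2 = 0 by apply: (@lin2 _ _ _ 1 _ (-1) _ Fa Fg); ring.
  move/eqP; rewrite mulrn_eq0 /= mulf_eq0 (negbTE g0) orbF.
  by rewrite (negbTE a0).
move=> H; exists (Dm _ (- beta * gamma - k) (- alpha * gamma - k) (- k)); split.
  apply/deriv_iff; rewrite /k.
  by case: H => [[-> [-> [-> _]]]|[-> ->]|[-> ->]|[_ [-> ->]]]; split; ring.
by move=> X; rewrite RicE mulD; apply: row3P; rewrite !mxE /=; ring.
Qed.
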